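(* Let $m\ge1$, let $k_1,k_2\ge0$ be integers and $r_1,r_2>0$ with $r_1^2+r_2^2=1$. Let $F_1:\mathbb{R}^{m+1}\to\mathbb{R}^{n_1+1}$ and $F_2:\mathbb{R}^{m+1}\to\mathbb{R}^{n_2+1}$ be forms of degrees $k_1$, $k_2$ (all components homogeneous polynomials of that degree) with $|F_1(\bar x)|^2=r_1^2|\bar x|^{2k_1}$ and $|F_2(\bar x)|^2=r_2^2|\bar x|^{2k_2}$ for all $\bar x$, restricting to $\varphi_1:\mathbb{S}^m\to\mathbb{S}^{n_1}(r_1)$, $\varphi_2:\mathbb{S}^m\to\mathbb{S}^{n_2}(r_2)$. Let $F=(F_1,F_2):\mathbb{R}^{m+1}\to\mathbb{R}^{n_1+n_2+2}$, $\Phi=(\Phi_1,\Phi_2)$ its restriction to $\mathbb{S}^m$, and $\varphi=\iota\circ(\varphi_1,\varphi_2):\mathbb{S}^m\to\mathbb{S}^{n_1+n_2+1}$, where $\iota$ is the canonical inclusion of $\mathbb{S}^{n_1}(r_1)\times\mathbb{S}^{n_2}(r_2)$ into $\mathbb{S}^{n_1+n_2+1}$. Then, at every point of $\mathbb{S}^m$, $$\tau(\varphi)=-\Delta^0F+\Big(\big(|d^0F|^2-k_1^2r_1^2-k_2^2r_2^2+k_1(1-m-k_1)\big)\Phi_1,\ \big(|d^0F|^2-k_1^2r_1^2-k_2^2r_2^2+k_2(1-m-k_2)\big)\Phi_2\Big).$$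
   Context: $\mathbb{S}^m$ is the unit sphere in $\mathbb{R}^{m+1}$, $\mathbb{S}^n(r)$ the sphere of radius $r$ centred at $0$. The tension field $\tau(\varphi)=\operatorname{trace}\nabla d\varphi$ is regarded as an $\mathbb{R}^{n_1+n_2+2}$-valued function on $\mathbb{S}^m$ via the inclusion $\mathbb{S}^{n_1+n_2+1}\subset\mathbb{R}^{n_1+n_2+2}$. Operators on $\mathbb{R}^{m+1}$ (evaluated at points of $\mathbb{S}^m$): $\Delta^0F=-\sum_i\partial^2F/\partial(x^i)^2$ componentwise; $|d^0F|^2=\sum_{i=1}^{m+1}|\partial F/\partial x^i|^2$. *)

(* Defs.v *)
From Stdlib Require Import Reals Lra Lia List Arith.
From Coquelicot Require Import Coquelicot.
Open Scope R_scope.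

(* Points of R^{n+1} are functions nat -> R whose coordinates 0..n are used. *)

Fixpoint sumR (n : nat) (f : nat -> R) : R :=
  match n with O => 0 | S p => sumR p f + f p end.

Fixpoint prodR (n : nat) (f : nat -> R) : R :=
  match n with O => 1 | S p => prodR p f * f p end.

Fixpoint sumN (n : nat) (f : nat -> nat) : nat :=
  match n with O => O | S p => (sumN p f + f p)%nat end.

Definition dotR (n : nat) (u v : nat -> R) : R := sumR (S n) (fun i => u i * v i).
Definition nsq (n : nat) (u : nat -> R) : R := dotR n u u.

Definition monomial (m : nat) (alpha : nat -> nat) (x : nat -> R) : R :=
  prodR (S m) (fun i => x i ^ alpha i).

Definition is_form (m k : nat) (f : (nat -> R) -> R) : Prop :=
  exists l : list (R * (nat -> nat)),
    List.Forall (fun p : R * (nat -> nat) => sumN (S m) (Datatypes.snd p) = k) l /\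
    forall x, f x = fold_right (fun (p : R * (nat -> nat)) (acc : R) => Datatypes.fst p * monomial m (Datatypes.snd p) x + acc) 0 l.

(* F = (F1, F2) : R^{m+1} -> R^{n1+1} x R^{n2+1} = R^{n1+n2+2} *)
Definition concat_map (n1 : nat) (F1 F2 : (nat -> R) -> nat -> R)
  : (nat -> R) -> nat -> R :=
  fun x j => if (j <=? n1)%nat then F1 x j else F2 x (j - S n1)%nat.

Definition std_basis (i : nat) : nat -> R := fun l => if Nat.eqb l i then 1 else 0.

Definition partial (F : (nat -> R) -> nat -> R) (i j : nat) (x : nat -> R) : R :=
  Derive (fun t => F (fun l => x l + t * std_basis i l) j) 0.

Definition lap0 (m : nat) (F : (nat -> R) -> nat -> R) (x : nat -> R) (j : nat) : R :=
  - sumR (S m) (fun i => Derive_n (fun t => F (fun l => x l + t * std_basis i l) j) 2 0).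

Definition d0sq (m N : nat) (F : (nat -> R) -> nat -> R) (x : nat -> R) : R :=
  sumR (S m) (fun i => sumR (S N) (fun j => (partial F i j x) ^ 2)).

Definition tangent_frame (m : nat) (x : nat -> R) (e : nat -> nat -> R) : Prop :=
  (forall a, (a < m)%nat -> dotR m (e a) x = 0) /\
  (forall a b, (a < m)%nat -> (b < m)%nat ->
     dotR m (e a) (e b) = if Nat.eqb a b then 1 else 0).

Definition geod (x v : nat -> R) (t : R) : nat -> R :=
  fun l => cos t * x l + sin t * v l.

(* Tension field tau(phi) = trace nabla d phi at x, computed in the orthonormal
   frame e of T_x S^m, for the map phi = F|_{S^m} : S^m -> S^N (unit sphere of
   R^{N+1}), as an R^{N+1}-valued vector:
   nabla d phi (e_a, e_a) is the tangential (to S^N at phi(x)) part of the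
   ambient acceleration of the curve phi o gamma_a at t = 0, gamma_a being the
   geodesic with gamma_a(0) = x, gamma_a'(0) = e_a. *)
Definition tension (m N : nat) (F : (nat -> R) -> nat -> R) (x : nat -> R)
  (e : nat -> nat -> R) : nat -> R :=
  let A := fun j => sumR m (fun a => Derive_n (fun t => F (geod x (e a) t) j) 2 0) in
  let P := F x in
  fun j => A j - (dotR N A P / nsq N P) * P j.

(* Main.v *)
Require Import Defs.
From Stdlib Require Import Reals Lra Lia FunctionalExtensionality.
From Stdlib Require List.
From mathcomp Require all_boot all_algebra Rstruct.
From Coquelicot Require Import Coquelicot.
Open Scope R_scope.

Lemma sumR_ext n f g : (forall i, (i < n)%nat -> f i = g i) -> sumR n f = sumR n g.
Proof. induction n; simpl; intros H; auto. rewrite IHn by (intros; apply H; lia). rewrite H by lia. reflexivity. Qed.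

Lemma sumR_plus n f g : sumR n (fun i => f i + g i) = sumR n f + sumR n g.
Proof. induction n; simpl. ring. rewrite IHn. ring. Qed.

Lemma sumR_scal n a f : sumR n (fun i => a * f i) = a * sumR n f.
Proof. induction n; simpl. ring. rewrite IHn. ring. Qed.

Lemma sumR_scal_r n a f : sumR n (fun i => f i * a) = sumR n f * a.
Proof. induction n; simpl. ring. rewrite IHn. ring. Qed.

Lemma sumR_const n c : sumR n (fun _ => c) = INR n * c.
Proof. induction n; simpl sumR. simpl; ring. rewrite IHn, S_INR. ring. Qed.

Lemma sumR_opp n f : sumR n (fun i => - f i) = - sumR n f.
Proof. induction n; simpl. ring. rewrite IHn. ring. Qed.

Lemma sumR_single n l f : (l < n)%nat -> (forall i, (i < n)%nat -> i <> l -> f i = 0) -> sumR n f = f l.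
Proof.
  induction n; intros Hl H. lia. simpl.
  destruct (Nat.eq_dec l n) as [->|Hne].
  - rewrite (sumR_ext n f (fun _ => 0)). rewrite sumR_const. ring.
    intros; apply H; lia.
  - rewrite IHn by (try lia; intros; apply H; lia). rewrite (H n) by lia. ring.
Qed.

Lemma sumR_swap n p f : sumR n (fun a => sumR p (fun i => f a i)) = sumR p (fun i => sumR n (fun a => f a i)).
Proof.
  induction n; simpl.
  - rewrite sumR_const. ring.
  - rewrite IHn, <- sumR_plus. reflexivity.
Qed.

Lemma sumR_app a b f : sumR (a + b) f = sumR a f + sumR b (fun j => f (a + j)%nat).
Proof.
  induction b; simpl. rewrite Nat.add_0_r. ring.
  rewrite Nat.add_succ_r. simpl. rewrite IHb. ring.
Qed.

Lemma isd_eq (f : R -> R) (x a b : R) : is_derive f x a -> a = b -> is_derive f x b.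
Proof. intros H ->; exact H. Qed.

Lemma isd_const (a x : R) : is_derive (fun _ => a) x 0.
Proof. apply (is_derive_const a x). Qed.

Lemma isd_plus (f g : R -> R) (x df dg : R) : is_derive f x df -> is_derive g x dg ->
  is_derive (fun t => f t + g t) x (df + dg).
Proof. intros; apply (is_derive_plus f g x df dg); auto. Qed.

Lemma isd_mult (f g : R -> R) (x df dg : R) : is_derive f x df -> is_derive g x dg ->
  is_derive (fun t => f t * g t) x (df * g x + f x * dg).
Proof. intros; apply (is_derive_mult f g x df dg); auto. intros; apply Rmult_comm. Qed.

Lemma isd_ext (f g : R -> R) (x d : R) : (forall t, f t = g t) -> is_derive f x d -> is_derive g x d.
Proof. intros; eapply is_derive_ext; eauto. Qed.

Lemma isd_sumR n (phi : nat -> R -> R) (dphi : nat -> R) x :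
  (forall i, (i < n)%nat -> is_derive (phi i) x (dphi i)) ->
  is_derive (fun t => sumR n (fun i => phi i t)) x (sumR n dphi).
Proof.
  induction n; intros H; simpl.
  - apply isd_const.
  - apply (isd_plus (fun t => sumR n (fun i => phi i t)) (phi n)); auto.
Qed.

Definition C1 (m : nat) (f : (nat -> R) -> R) (g : nat -> (nat -> R) -> R) : Prop :=
  forall (c : R -> nat -> R) (c1 : nat -> R) (t : R),
    (forall l, (l <= m)%nat -> is_derive (fun s => c s l) t (c1 l)) ->
    is_derive (fun s => f (c s)) t (sumR (S m) (fun i => g i (c t) * c1 i)).

Definition D2 m f g H := C1 m f g /\ forall i, C1 m (g i) (H i).
Definition Poly2 m f := exists g H, D2 m f g H.

Lemma C1_const m a : C1 m (fun _ => a) (fun _ _ => 0).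
Proof.
  intros c c1 t Hc. eapply isd_eq. apply isd_const.
  rewrite (sumR_ext _ _ (fun _ => 0)) by (intros; ring). rewrite sumR_const; ring.
Qed.

Lemma C1_proj m l : (l <= m)%nat -> C1 m (fun y => y l) (fun i _ => if Nat.eqb i l then 1 else 0).
Proof.
  intros Hl c c1 t Hc. eapply isd_eq. apply (Hc l Hl).
  rewrite (sumR_single (S m) l). rewrite Nat.eqb_refl; ring. lia.
  intros i Hi Hne. apply Nat.eqb_neq in Hne. rewrite Hne. ring.
Qed.

Lemma C1_plus m f1 f2 g1 g2 : C1 m f1 g1 -> C1 m f2 g2 ->
  C1 m (fun y => f1 y + f2 y) (fun i y => g1 i y + g2 i y).
Proof.
  intros H1 H2 c c1 t Hc. eapply isd_eq.
  apply (isd_plus (fun s => f1 (c s)) (fun s => f2 (c s))); [apply H1 | apply H2]; auto.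
  rewrite <- sumR_plus. apply sumR_ext; intros; ring.
Qed.

Lemma C1_mult m f1 f2 g1 g2 : C1 m f1 g1 -> C1 m f2 g2 ->
  C1 m (fun y => f1 y * f2 y) (fun i y => g1 i y * f2 y + f1 y * g2 i y).
Proof.
  intros H1 H2 c c1 t Hc. eapply isd_eq.
  apply (isd_mult (fun s => f1 (c s)) (fun s => f2 (c s))); [apply H1 | apply H2]; auto.
  rewrite <- sumR_scal, <- sumR_scal_r, <- sumR_plus. apply sumR_ext; intros; ring.
Qed.

Lemma C1_ext m f f' g : (forall y, f y = f' y) -> C1 m f g -> C1 m f' g.
Proof.
  intros E H c c1 t Hc. eapply isd_ext. 2: apply H; auto. intros; simpl; apply E.
Qed.

Lemma Poly2_const m a : Poly2 m (fun _ => a).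
Proof. exists (fun _ _ => 0), (fun _ _ _ => 0). split. apply C1_const. intros; apply C1_const. Qed.

Lemma Poly2_proj m l : (l <= m)%nat -> Poly2 m (fun y => y l).
Proof.
  intros Hl. exists (fun i _ => if Nat.eqb i l then 1 else 0), (fun _ _ _ => 0). split.
  apply C1_proj; auto. intros; apply C1_const.
Qed.

Lemma Poly2_plus m f1 f2 : Poly2 m f1 -> Poly2 m f2 -> Poly2 m (fun y => f1 y + f2 y).
Proof.
  intros (g1 & H1 & A1 & B1) (g2 & H2 & A2 & B2). do 2 eexists. split.
  apply C1_plus; eauto. intros i. apply C1_plus; eauto.
Qed.

Lemma Poly2_mult m f1 f2 : Poly2 m f1 -> Poly2 m f2 -> Poly2 m (fun y => f1 y * f2 y).
Proof.
  intros (g1 & H1 & A1 & B1) (g2 & H2 & A2 & B2). do 2 eexists. split.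
  apply C1_mult; eauto. intros i. apply C1_plus; apply C1_mult; eauto.
Qed.

Lemma Poly2_ext m f f' : (forall y, f y = f' y) -> Poly2 m f -> Poly2 m f'.
Proof.
  intros E (g & H & A & B). exists g, H. split; auto. eapply C1_ext; eauto.
Qed.

Lemma Poly2_pow m l a : (l <= m)%nat -> Poly2 m (fun y => y l ^ a).
Proof.
  intros Hl. induction a; simpl.
  - apply Poly2_const.
  - apply Poly2_mult; auto. apply Poly2_proj; auto.
Qed.

Lemma Poly2_prod m n (al : nat -> nat) : (n <= S m)%nat ->
  Poly2 m (fun y => prodR n (fun i => y i ^ al i)).
Proof.
  induction n; intros Hn; simpl.
  - apply Poly2_const.
  - apply Poly2_mult. apply IHn; lia. apply Poly2_pow; lia.
Qed.

Lemma Poly2_form m k f : is_form m k f -> Poly2 m f.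
Proof.
  intros (l & _ & E). eapply Poly2_ext. intros y; symmetry; apply E.
  clear E. induction l as [|p l IH]; simpl.
  - apply Poly2_const.
  - apply Poly2_plus; auto. apply Poly2_mult. apply Poly2_const.
    unfold monomial. apply Poly2_prod. lia.
Qed.

Lemma prodR_scale n (al : nat -> nat) (lam : R) (y : nat -> R) :
  prodR n (fun i => (lam * y i) ^ al i) = lam ^ sumN n al * prodR n (fun i => y i ^ al i).
Proof.
  induction n; simpl. ring. rewrite IHn, Rpow_mult_distr, pow_add. ring.
Qed.

Lemma form_homog m k f : is_form m k f -> forall lam y, f (fun l => lam * y l) = lam ^ k * f y.
Proof.
  intros (l & HF & E) lam y. rewrite !E. clear E.
  induction l as [|p l IH]; simpl. ring.
  pose proof (List.Forall_inv HF) as Hp; pose proof (List.Forall_inv_tail HF) as Hl. cbv beta in Hp. rewrite IH by auto. unfold monomial. rewrite prodR_scale, Hp. ring.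
Qed.

Lemma is_form_ext m k f f' : (forall y, f y = f' y) -> is_form m k f -> is_form m k f'.
Proof. intros E (l & A & B). exists l; split; auto. intros; rewrite <- E; auto. Qed.

Definition TwiceAt0 (phi : R -> R) (v1 v2 : R) : Prop :=
  exists d1 : R -> R, (forall t, is_derive phi t (d1 t)) /\ d1 0 = v1 /\ is_derive d1 0 v2.

Lemma TwiceAt0_Derive phi v1 v2 : TwiceAt0 phi v1 v2 -> Derive phi 0 = v1 /\ Derive_n phi 2 0 = v2.
Proof.
  intros (d1 & A & B & C). split.
  - rewrite <- B. apply is_derive_unique; auto.
  - simpl. rewrite (Derive_ext _ d1). apply is_derive_unique; auto.
    intros t. apply is_derive_unique. apply (isd_ext phi). reflexivity. auto.
Qed.

Lemma TwiceAt0_unique phi psi a b c d : TwiceAt0 phi a b -> TwiceAt0 psi c d ->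
  (forall t, phi t = psi t) -> a = c /\ b = d.
Proof.
  intros H1 H2 E. apply TwiceAt0_Derive in H1. apply TwiceAt0_Derive in H2.
  destruct H1 as [<- <-], H2 as [<- <-]. split.
  apply Derive_ext; auto.
  simpl. apply Derive_ext. intros t. apply Derive_ext. auto.
Qed.

Lemma TwiceAt0_ext phi psi a b : (forall t, phi t = psi t) -> TwiceAt0 phi a b -> TwiceAt0 psi a b.
Proof.
  intros E (d1 & A & B & C). exists d1; split; [|split]; auto.
  intros t; apply (isd_ext phi); auto.
Qed.

Lemma TwiceAt0_const a : TwiceAt0 (fun _ => a) 0 0.
Proof. exists (fun _ => 0). split; [|split]; auto; intros; apply isd_const. Qed.

Lemma TwiceAt0_lin a b : TwiceAt0 (fun t => a + t * b) b 0.
Proof.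
  exists (fun _ => b). split; [|split]; [| reflexivity | apply isd_const].
  intros t. auto_derive; auto. ring.
Qed.

Lemma TwiceAt0_plus phi psi a b c d : TwiceAt0 phi a b -> TwiceAt0 psi c d ->
  TwiceAt0 (fun t => phi t + psi t) (a + c) (b + d).
Proof.
  intros (d1 & A & B & C) (e1 & A' & B' & C').
  exists (fun t => d1 t + e1 t). split; [|split].
  intros; apply isd_plus; auto. rewrite B, B'; auto. apply isd_plus; auto.
Qed.

Lemma TwiceAt0_mult phi psi a b c d : TwiceAt0 phi a b -> TwiceAt0 psi c d ->
  TwiceAt0 (fun t => phi t * psi t) (a * psi 0 + phi 0 * c) (b * psi 0 + a * c + a * c + phi 0 * d).
Proof.
  intros (d1 & A & B & C) (e1 & A' & B' & C').
  exists (fun t => d1 t * psi t + phi t * e1 t). split; [|split].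
  - intros; apply isd_mult; auto.
  - rewrite B, B'; auto.
  - eapply isd_eq. apply isd_plus; apply isd_mult; eauto.
    rewrite B, B'. ring.
Qed.

Lemma TwiceAt0_sum n (phi : nat -> R -> R) (a b : nat -> R) :
  (forall j, (j < n)%nat -> TwiceAt0 (phi j) (a j) (b j)) ->
  TwiceAt0 (fun t => sumR n (fun j => phi j t)) (sumR n a) (sumR n b).
Proof.
  induction n; intros H; simpl.
  - apply TwiceAt0_const.
  - apply (TwiceAt0_plus (fun t => sumR n (fun j => phi j t)) (phi n)).
    apply IHn; intros; apply H; lia. apply H; lia.
Qed.

Lemma TwiceAt0_pow phi a b k : TwiceAt0 phi a b -> phi 0 = 1 ->
  TwiceAt0 (fun t => phi t ^ k) (INR k * a) (INR k * b + INR k * (INR k - 1) * a ^ 2).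
Proof.
  intros H H0. induction k.
  - simpl. replace (0 * a) with 0 by ring. replace (0 * b + 0 * (0 - 1) * (a * (a * 1))) with 0 by ring.
    apply (TwiceAt0_const 1).
  - pose proof (TwiceAt0_mult _ _ _ _ _ _ H IHk) as M.
    replace (INR (S k) * a) with (a * phi 0 ^ k + phi 0 * (INR k * a)).
    replace (INR (S k) * b + INR (S k) * (INR (S k) - 1) * a ^ 2) with
      (b * phi 0 ^ k + a * (INR k * a) + a * (INR k * a) + phi 0 * (INR k * b + INR k * (INR k - 1) * a ^ 2)).
    exact M.
    all: rewrite H0, pow1, S_INR; ring.
Qed.

Lemma chain2 m f g H (HD : D2 m f g H) (c c1 c2 : R -> nat -> R) :
  (forall t l, (l <= m)%nat -> is_derive (fun s => c s l) t (c1 t l)) ->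
  (forall t l, (l <= m)%nat -> is_derive (fun s => c1 s l) t (c2 t l)) ->
  TwiceAt0 (fun t => f (c t)) (sumR (S m) (fun i => g i (c 0) * c1 0 i))
    (sumR (S m) (fun i => sumR (S m) (fun j => H i j (c 0) * c1 0 j) * c1 0 i + g i (c 0) * c2 0 i)).
Proof.
  intros Hc Hc1. destruct HD as [A B].
  exists (fun t => sumR (S m) (fun i => g i (c t) * c1 t i)). split; [|split].
  - intros t. apply A. intros; apply Hc; auto.
  - reflexivity.
  - apply (isd_sumR (S m) (fun i t => g i (c t) * c1 t i)). intros i Hi.
    apply (isd_mult (fun t => g i (c t)) (fun t => c1 t i)).
    apply B. intros; apply Hc; auto. apply Hc1; lia.
Qed.

Lemma trace_lemma m (x : nat -> R) (e : nat -> nat -> R) (h : nat -> nat -> R) :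
  (forall i j, (i <= m)%nat -> (j <= m)%nat ->
     sumR m (fun a => e a i * e a j) + x i * x j = if Nat.eqb i j then 1 else 0) ->
  sumR m (fun a => sumR (S m) (fun i => sumR (S m) (fun j => h i j * e a j) * e a i))
  + sumR (S m) (fun i => sumR (S m) (fun j => h i j * x j) * x i) = sumR (S m) (fun i => h i i).
Proof.
  intros Hc.
  transitivity (sumR (S m) (fun i => sumR (S m) (fun j => h i j * (sumR m (fun a => e a i * e a j) + x i * x j)))).
  - rewrite (sumR_swap m (S m) (fun a i => sumR (S m) (fun j => h i j * e a j) * e a i)).
    rewrite <- sumR_plus. apply sumR_ext; intros i Hi.
    rewrite (sumR_ext m _ (fun a => sumR (S m) (fun j => h i j * e a j * e a i)))
      by (intros; rewrite <- sumR_scal_r; reflexivity).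
    rewrite (sumR_swap m (S m) (fun a j => h i j * e a j * e a i)).
    rewrite <- sumR_scal_r, <- sumR_plus. apply sumR_ext; intros j Hj.
    rewrite (sumR_ext m _ (fun a => h i j * (e a i * e a j))) by (intros; ring).
    rewrite sumR_scal. ring.
  - apply sumR_ext; intros i Hi. rewrite (sumR_single (S m) i).
    rewrite Hc, Nat.eqb_refl by lia; ring. lia.
    intros j Hj Hne. rewrite Hc by lia. rewrite (proj2 (Nat.eqb_neq i j)) by auto. ring.
Qed.

Lemma line0 (x v : nat -> R) : (fun l => x l + 0 * v l) = x.
Proof. apply functional_extensionality; intros; ring. Qed.

Lemma geod0 (x v : nat -> R) : (fun l => cos 0 * x l + sin 0 * v l) = x.
Proof. apply functional_extensionality; intros; rewrite cos_0, sin_0; ring. Qed.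

Lemma line_second m f g H (HD : D2 m f g H) x i : (i <= m)%nat ->
  TwiceAt0 (fun t => f (fun l => x l + t * std_basis i l)) (g i x) (H i i x).
Proof.
  intros Hi.
  pose proof (chain2 m f g H HD (fun t l => x l + t * std_basis i l) (fun _ l => std_basis i l) (fun _ _ => 0)) as C.
  cbv beta in C. rewrite line0 in C.
  eapply TwiceAt0_ext; [intros; reflexivity|].
  replace (g i x) with (sumR (S m) (fun i0 => g i0 x * std_basis i i0)).
  replace (H i i x) with (sumR (S m) (fun i0 => sumR (S m) (fun j => H i0 j x * std_basis i j) * std_basis i i0 + g i0 x * 0)).
  apply C.
  - intros t l _. auto_derive; auto. ring.
  - intros; apply isd_const.
  - rewrite (sumR_single (S m) i). rewrite (sumR_single (S m) i).
    unfold std_basis. rewrite Nat.eqb_refl. ring.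
    lia. intros j Hj Hne. unfold std_basis. rewrite (proj2 (Nat.eqb_neq j i)) by auto. ring.
    lia. intros j Hj Hne. unfold std_basis. rewrite (proj2 (Nat.eqb_neq j i)) by auto. ring.
  - rewrite (sumR_single (S m) i). unfold std_basis. rewrite Nat.eqb_refl. ring.
    lia. intros j Hj Hne. unfold std_basis. rewrite (proj2 (Nat.eqb_neq j i)) by auto. ring.
Qed.

Lemma Poly2_line m f x i : Poly2 m f -> (i <= m)%nat ->
  TwiceAt0 (fun t => f (fun l => x l + t * std_basis i l))
    (Derive (fun t => f (fun l => x l + t * std_basis i l)) 0)
    (Derive_n (fun t => f (fun l => x l + t * std_basis i l)) 2 0).
Proof.
  intros (g & H & HD) Hi. pose proof (line_second m f g H HD x i Hi) as C.
  destruct (TwiceAt0_Derive _ _ _ C) as [-> ->]. exact C.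
Qed.

Lemma component m k f x e :
  is_form m k f ->
  (forall i j, (i <= m)%nat -> (j <= m)%nat ->
     sumR m (fun a => e a i * e a j) + x i * x j = if Nat.eqb i j then 1 else 0) ->
  sumR m (fun a => Derive_n (fun t => f (geod x (e a) t)) 2 0)
  = sumR (S m) (fun i => Derive_n (fun t => f (fun l => x l + t * std_basis i l)) 2 0)
    - INR k * (INR k + INR m - 1) * f x.
Proof.
  intros Hf Hc. destruct (Poly2_form _ _ _ Hf) as (g & H & HD).
  assert (L : forall i, (i < S m)%nat ->
     Derive_n (fun t => f (fun l => x l + t * std_basis i l)) 2 0 = H i i x).
  { intros i Hi. apply (TwiceAt0_Derive _ _ _ (line_second m f g H HD x i ltac:(lia))). }
  rewrite (sumR_ext _ _ _ L).
  (* Euler relations *)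
  pose proof (chain2 m f g H HD (fun t l => x l + t * x l) (fun _ l => x l) (fun _ _ => 0)) as CE.
  cbv beta in CE. rewrite line0 in CE.
  assert (CE' : TwiceAt0 (fun t => f (fun l => x l + t * x l))
     (sumR (S m) (fun i => g i x * x i))
     (sumR (S m) (fun i => sumR (S m) (fun j => H i j x * x j) * x i + g i x * 0))).
  { apply CE. intros t l _. auto_derive; auto. ring. intros; apply isd_const. }
  clear CE.
  pose proof (TwiceAt0_mult _ _ _ _ _ _ (TwiceAt0_pow _ _ _ k (TwiceAt0_lin 1 1) ltac:(cbv beta; ring))
      (TwiceAt0_const (f x))) as HE.
  destruct (TwiceAt0_unique _ _ _ _ _ _ CE' HE) as [E1 E2].
  { intros t. rewrite <- (form_homog m k f Hf). f_equal. apply functional_extensionality; intros; ring. }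
  clear CE' HE.
  replace (1 + 0 * 1) with 1 in E1, E2 by ring. rewrite pow1 in E1, E2.
  assert (G : forall a, (a < m)%nat ->
     Derive_n (fun t => f (geod x (e a) t)) 2 0 =
     sumR (S m) (fun i => sumR (S m) (fun j => H i j x * e a j) * e a i) - sumR (S m) (fun i => g i x * x i)).
  { intros a Ha.
    pose proof (chain2 m f g H HD (fun t l => cos t * x l + sin t * e a l)
       (fun t l => - sin t * x l + cos t * e a l) (fun t l => - cos t * x l - sin t * e a l)) as C.
    cbv beta in C. rewrite geod0 in C. rewrite cos_0, sin_0 in C.
    assert (D1 : forall t l, (l <= m)%nat -> is_derive (fun s => cos s * x l + sin s * e a l) t
       (- sin t * x l + cos t * e a l)) by (intros t l _; auto_derive; auto; ring).
    assert (D2' : forall t l, (l <= m)%nat -> is_derive (fun s => - sin s * x l + cos s * e a l) t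
       (- cos t * x l - sin t * e a l)) by (intros t l _; auto_derive; auto; ring).
    unfold geod. rewrite (proj2 (TwiceAt0_Derive _ _ _ (C D1 D2'))).
    unfold Rminus. rewrite <- sumR_opp, <- sumR_plus. apply sumR_ext; intros i Hi.
    rewrite (sumR_ext _ _ (fun j => H i j x * e a j)) by (intros; ring). ring. }
  rewrite (sumR_ext _ _ _ G).
  rewrite <- (trace_lemma m x e (fun i j => H i j x) Hc).
  rewrite (sumR_ext m _ (fun a => sumR (S m) (fun i => sumR (S m) (fun j => H i j x * e a j) * e a i)
       + - sumR (S m) (fun i => g i x * x i))) by (intros; ring).
  rewrite sumR_plus, sumR_const.
  rewrite E1. replace (sumR (S m) (fun i => sumR (S m) (fun j => H i j x * x j) * x i))
    with (sumR (S m) (fun i => sumR (S m) (fun j => H i j x * x j) * x i + g i x * 0))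
    by (apply sumR_ext; intros; ring).
  rewrite E2. ring.
Qed.

Lemma norm_line m N (F : (nat -> R) -> nat -> R) x r1 r2 k1 k2 i :
  (forall j, (j <= N)%nat -> Poly2 m (fun y => F y j)) ->
  (forall y, nsq N (F y) = r1 ^ 2 * (nsq m y) ^ k1 + r2 ^ 2 * (nsq m y) ^ k2) ->
  nsq m x = 1 -> (i <= m)%nat ->
  sumR (S N) (fun j => 2 * partial F i j x ^ 2
      + 2 * F x j * Derive_n (fun t => F (fun l => x l + t * std_basis i l) j) 2 0)
  = r1 ^ 2 * (2 * INR k1 + 4 * INR k1 * (INR k1 - 1) * x i ^ 2)
    + r2 ^ 2 * (2 * INR k2 + 4 * INR k2 * (INR k2 - 1) * x i ^ 2).
Proof.
  intros HP Hn Hx Hi.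
  assert (LT : TwiceAt0 (fun t => sumR (S N) (fun j => F (fun l => x l + t * std_basis i l) j
                                                  * F (fun l => x l + t * std_basis i l) j))
     (sumR (S N) (fun j => partial F i j x * F x j + F x j * partial F i j x))
     (sumR (S N) (fun j => Derive_n (fun t => F (fun l => x l + t * std_basis i l) j) 2 0 * F x j
        + partial F i j x * partial F i j x + partial F i j x * partial F i j x
        + F x j * Derive_n (fun t => F (fun l => x l + t * std_basis i l) j) 2 0))).
  { apply (TwiceAt0_sum (S N) (fun j t => F (fun l => x l + t * std_basis i l) j
                                          * F (fun l => x l + t * std_basis i l) j)).
    intros j Hj. pose proof (Poly2_line m (fun y => F y j) x i (HP j ltac:(lia)) Hi) as P.
    pose proof (TwiceAt0_mult _ _ _ _ _ _ P P) as M. cbv beta in M. rewrite line0 in M. exact M. }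
  assert (RT : TwiceAt0 (fun t => sumR (S m) (fun l => (x l + t * std_basis i l) * (x l + t * std_basis i l)))
     (2 * x i) 2).
  { pose proof (TwiceAt0_sum (S m) (fun l t => (x l + t * std_basis i l) * (x l + t * std_basis i l))
       _ _ (fun l _ => TwiceAt0_mult _ _ _ _ _ _ (TwiceAt0_lin (x l) (std_basis i l)) (TwiceAt0_lin (x l) (std_basis i l)))) as M.
    cbv beta in M.
    replace (2 * x i) with (sumR (S m) (fun l => std_basis i l * (x l + 0 * std_basis i l) + (x l + 0 * std_basis i l) * std_basis i l)).
    replace 2 with (sumR (S m) (fun l => 0 * (x l + 0 * std_basis i l) + std_basis i l * std_basis i l + std_basis i l * std_basis i l + (x l + 0 * std_basis i l) * 0)).
    exact M.
    - rewrite (sumR_single (S m) i). unfold std_basis. rewrite Nat.eqb_refl. ring. lia.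
      intros j Hj Hne. unfold std_basis. rewrite (proj2 (Nat.eqb_neq j i)) by auto. ring.
    - rewrite (sumR_single (S m) i). unfold std_basis. rewrite Nat.eqb_refl. ring. lia.
      intros j Hj Hne. unfold std_basis. rewrite (proj2 (Nat.eqb_neq j i)) by auto. ring. }
  assert (s0 : (fun t => sumR (S m) (fun l => (x l + t * std_basis i l) * (x l + t * std_basis i l))) 0 = 1).
  { cbv beta. rewrite <- Hx. unfold nsq, dotR. apply sumR_ext; intros; ring. }
  pose proof (TwiceAt0_plus _ _ _ _ _ _
     (TwiceAt0_mult _ _ _ _ _ _ (TwiceAt0_const (r1 ^ 2)) (TwiceAt0_pow _ _ _ k1 RT s0))
     (TwiceAt0_mult _ _ _ _ _ _ (TwiceAt0_const (r2 ^ 2)) (TwiceAt0_pow _ _ _ k2 RT s0))) as RP.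
  destruct (TwiceAt0_unique _ _ _ _ _ _ LT RP) as [_ E].
  { intros t. cbv beta. apply Hn. }
  rewrite (sumR_ext _ _ (fun j => Derive_n (fun t => F (fun l => x l + t * std_basis i l) j) 2 0 * F x j
        + partial F i j x * partial F i j x + partial F i j x * partial F i j x
        + F x j * Derive_n (fun t => F (fun l => x l + t * std_basis i l) j) 2 0))
    by (intros; ring).
  rewrite E. ring.
Qed.

Lemma norm_part m N (F : (nat -> R) -> nat -> R) x r1 r2 k1 k2 :
  (forall j, (j <= N)%nat -> Poly2 m (fun y => F y j)) ->
  (forall y, nsq N (F y) = r1 ^ 2 * (nsq m y) ^ k1 + r2 ^ 2 * (nsq m y) ^ k2) ->
  nsq m x = 1 ->
  sumR (S N) (fun j => F x j * lap0 m F x j) =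
  d0sq m N F x - (r1 ^ 2 * INR k1 * (2 * INR k1 + INR m - 1) + r2 ^ 2 * INR k2 * (2 * INR k2 + INR m - 1)).
Proof.
  intros HP Hn Hx.
  assert (S1 := sumR_ext (S m) _ _ (fun i Hi => norm_line m N F x r1 r2 k1 k2 i HP Hn Hx ltac:(lia))).
  cbv beta in S1.
  rewrite (sumR_ext (S m) _ (fun i => 2 * sumR (S N) (fun j => partial F i j x ^ 2)
       + 2 * sumR (S N) (fun j => F x j * Derive_n (fun t => F (fun l => x l + t * std_basis i l) j) 2 0))) in S1
    by (intros; rewrite <- !sumR_scal, <- sumR_plus; apply sumR_ext; intros; ring).
  rewrite sumR_plus, !sumR_scal in S1.
  rewrite (sumR_swap (S m) (S N) (fun i j => F x j * Derive_n (fun t => F (fun l => x l + t * std_basis i l) j) 2 0)) in S1.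
  rewrite (sumR_ext (S N) _ (fun j => - (F x j * lap0 m F x j))) in S1.
  2:{ intros j Hj. unfold lap0. rewrite sumR_scal. ring. }
  rewrite sumR_opp in S1.
  rewrite (sumR_ext (S m) (fun i => r1 ^ 2 * (2 * INR k1 + 4 * INR k1 * (INR k1 - 1) * x i ^ 2)
       + r2 ^ 2 * (2 * INR k2 + 4 * INR k2 * (INR k2 - 1) * x i ^ 2)) (fun i => (r1 ^ 2 * 2 * INR k1 + r2 ^ 2 * 2 * INR k2)
       + (r1 ^ 2 * 4 * INR k1 * (INR k1 - 1) + r2 ^ 2 * 4 * INR k2 * (INR k2 - 1)) * (x i * x i))) in S1
    by (intros; ring).
  rewrite sumR_plus, sumR_const, sumR_scal in S1.
  unfold nsq, dotR in Hx. rewrite Hx in S1. rewrite S_INR in S1.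
  unfold d0sq. lra.
Qed.

Module MC.
Import all_boot all_algebra Rstruct.
Import GRing.Theory.
Local Open Scope ring_scope.
Lemma bridge (n : nat) (f : nat -> R) : \sum_(i < n) f i = sumR n f.
Proof.
elim: n => [|n IH]; first by rewrite big_ord0.
by rewrite big_ord_recr /= IH.
Qed.
Lemma orth_cols (n : nat) (v : nat -> nat -> R) :
  (forall r s, (r < n)%N -> (s < n)%N -> sumR n (fun i => v r i * v s i) = if r == s then 1 else 0) ->
  forall i j, (i < n)%N -> (j < n)%N -> sumR n (fun r => v r i * v r j) = if i == j then 1 else 0.
Proof.
move=> H i j hi hj.
pose U := \matrix_(r < n, k < n) v r k.
have H1 : U *m U^T = 1%:M.
  apply/matrixP => r s; rewrite !mxE.
  under eq_bigr do rewrite !mxE.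
  rewrite (bridge n (fun k => v r k * v s k)) H //.
  change (nat_of_ord r == nat_of_ord s) with (r == s); case: (r == s); by rewrite ?mulr1n ?mulr0n.
have H2 := mulmx1C H1.
rewrite -(bridge n (fun k => v k i * v k j)).
transitivity ((U^T *m U) (Ordinal hi) (Ordinal hj)).
  rewrite !mxE; apply: eq_bigr => k _; by rewrite !mxE.
rewrite H2 mxE /=. change (Ordinal hi == Ordinal hj) with (i == j). by case: (i == j); rewrite ?mulr1n ?mulr0n.
Qed.
Lemma eqb_eqop (a b : nat) : Nat.eqb a b = (a == b).
Proof. by case: (Nat.eqb_spec a b) => [->|/eqP/negbTE ->]; rewrite ?eqxx. Qed.
Lemma orth_cols_std (n : nat) (v : nat -> nat -> R) :
  (forall r s, (r < n)%coq_nat -> (s < n)%coq_nat ->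
     sumR n (fun i => Rmult (v r i) (v s i)) = if Nat.eqb r s then R1 else R0) ->
  forall i j, (i < n)%coq_nat -> (j < n)%coq_nat ->
     sumR n (fun r => Rmult (v r i) (v r j)) = if Nat.eqb i j then R1 else R0.
Proof.
move=> H i j /ltP hi /ltP hj.
rewrite eqb_eqop.
have Hm : forall r s, (r < n)%N -> (s < n)%N -> sumR n (fun i => v r i * v s i) = if r == s then 1 else 0.
  move=> r s /ltP hr /ltP hs.
  by rewrite (H r s hr hs) eqb_eqop; case: (r == s).
by rewrite (orth_cols n v Hm i j hi hj); case: (i == j).
Qed.
End MC.

Lemma frame_complete m x e : nsq m x = 1 -> tangent_frame m x e ->
  forall i j, (i <= m)%nat -> (j <= m)%nat ->
    sumR m (fun a => e a i * e a j) + x i * x j = if Nat.eqb i j then 1 else 0.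
Proof.
  intros Hx [Ho Hn] i j Hi Hj.
  set (v := fun r => if Nat.ltb r m then e r else x).
  assert (Hv : forall r s, (r < S m)%nat -> (s < S m)%nat ->
     sumR (S m) (fun i => v r i * v s i) = if Nat.eqb r s then R1 else R0).
  { intros r s Hr Hs. unfold v. change R0 with 0. change R1 with 1.
    destruct (Nat.ltb_spec r m), (Nat.ltb_spec s m).
    - apply (Hn r s); auto.
    - assert (s = m) by lia; subst s. rewrite (proj2 (Nat.eqb_neq r m)) by lia. apply (Ho r); auto.
    - assert (r = m) by lia; subst r. rewrite (proj2 (Nat.eqb_neq m s)) by lia.
      rewrite <- (Ho s H0). apply sumR_ext; intros; ring.
    - assert (r = m) by lia; assert (s = m) by lia; subst. rewrite Nat.eqb_refl. exact Hx. }
  pose proof (MC.orth_cols_std (S m) v Hv i j ltac:(lia) ltac:(lia)) as E.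
  simpl in E. unfold v in E. rewrite Nat.ltb_irrefl in E. change R1 with 1 in E. change R0 with 0 in E.
  rewrite <- E. f_equal. apply sumR_ext. intros a Ha. rewrite (proj2 (Nat.ltb_lt a m) Ha). reflexivity.
Qed.

Lemma final_alg (A L P Pj d0 r1 r2 k1 k2 kj mm c1 c2 : R) :
  A = - L - kj * (kj + mm - 1) * Pj ->
  P = 1 ->
  c1 = d0 - (r1 ^ 2 * k1 * (2 * k1 + mm - 1) + r2 ^ 2 * k2 * (2 * k2 + mm - 1)) ->
  c2 = k1 * (k1 + mm - 1) * r1 ^ 2 + k2 * (k2 + mm - 1) * r2 ^ 2 ->
  A - (- c1 - c2) / P * Pj = - L + (d0 - k1 ^ 2 * r1 ^ 2 - k2 ^ 2 * r2 ^ 2 + kj * (1 - mm - kj)) * Pj.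
Proof. intros -> -> -> ->. field. Qed.

Theorem mainTheorem3 (m k1 k2 n1 n2 : nat) (r1 r2 : R)
  (F1 F2 : (nat -> R) -> nat -> R) :
  (1 <= m)%nat ->
  0 < r1 -> 0 < r2 -> r1 ^ 2 + r2 ^ 2 = 1 ->
  (forall j, (j <= n1)%nat -> is_form m k1 (fun x => F1 x j)) ->
  (forall j, (j <= n2)%nat -> is_form m k2 (fun x => F2 x j)) ->
  (forall x, nsq n1 (F1 x) = r1 ^ 2 * (nsq m x) ^ k1) ->
  (forall x, nsq n2 (F2 x) = r2 ^ 2 * (nsq m x) ^ k2) ->
  let F := concat_map n1 F1 F2 in
  let N := (n1 + n2 + 1)%nat in
  forall (x : nat -> R) (e : nat -> nat -> R),
    nsq m x = 1 -> tangent_frame m x e ->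
    (forall j, (j <= n1)%nat ->
       tension m N F x e j =
       - lap0 m F x j
       + (d0sq m N F x - INR k1 ^ 2 * r1 ^ 2 - INR k2 ^ 2 * r2 ^ 2
          + INR k1 * (1 - INR m - INR k1)) * F1 x j) /\
    (forall j, (j <= n2)%nat ->
       tension m N F x e (S n1 + j)%nat =
       - lap0 m F x (S n1 + j)%nat
       + (d0sq m N F x - INR k1 ^ 2 * r1 ^ 2 - INR k2 ^ 2 * r2 ^ 2
          + INR k2 * (1 - INR m - INR k2)) * F2 x j).
Proof.
  intros Hm Hr1 Hr2 Hr HF1 HF2 Hn1 Hn2 F N x e Hx Hfr.
  assert (Hc := frame_complete m x e Hx Hfr).
  assert (SN : S N = (S n1 + S n2)%nat) by (unfold N; lia).
  assert (F1E : forall y j, (j <= n1)%nat -> F y j = F1 y j).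
  { intros y j Hj. unfold F, concat_map. rewrite (proj2 (Nat.leb_le j n1) Hj). reflexivity. }
  assert (F2E : forall y j, F y (S n1 + j)%nat = F2 y j).
  { intros y j. unfold F, concat_map.
    rewrite (proj2 (Nat.leb_gt (S n1 + j) n1)) by lia. f_equal. lia. }
  assert (HF : forall j, (j <= N)%nat ->
     is_form m (if Nat.leb j n1 then k1 else k2) (fun y => F y j)).
  { intros j Hj. destruct (Nat.leb_spec j n1).
    - eapply is_form_ext. 2: apply (HF1 j H). intros y; cbv beta; rewrite F1E; auto.
    - eapply is_form_ext. 2: apply (HF2 (j - S n1)%nat ltac:(unfold N in Hj; lia)).
      intros y; cbv beta; rewrite <- F2E. f_equal. lia. }
  assert (Hn : forall y, nsq N (F y) = r1 ^ 2 * (nsq m y) ^ k1 + r2 ^ 2 * (nsq m y) ^ k2).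
  { intros y. rewrite <- Hn1, <- Hn2. unfold nsq, dotR. rewrite SN, sumR_app. f_equal.
    - apply sumR_ext; intros; rewrite F1E by lia; reflexivity.
    - apply sumR_ext; intros; rewrite F2E; reflexivity. }
  assert (HP : forall j, (j <= N)%nat -> Poly2 m (fun y => F y j)).
  { intros j Hj. eapply Poly2_form. apply HF; auto. }
  assert (NP := norm_part m N F x r1 r2 k1 k2 HP Hn Hx).
  assert (Hnx : nsq N (F x) = 1) by (rewrite Hn, Hx, !pow1; lra).
  assert (CA : forall j, (j <= N)%nat ->
     sumR m (fun a => Derive_n (fun t => F (geod x (e a) t) j) 2 0) =
     - lap0 m F x j - INR (if Nat.leb j n1 then k1 else k2) *
        (INR (if Nat.leb j n1 then k1 else k2) + INR m - 1) * F x j).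
  { intros j Hj. rewrite (component m _ (fun y => F y j) x e (HF j Hj) Hc). unfold lap0. ring. }
  assert (DA : dotR N (fun j => sumR m (fun a => Derive_n (fun t => F (geod x (e a) t) j) 2 0)) (F x)
     = - sumR (S N) (fun j => F x j * lap0 m F x j)
       - (INR k1 * (INR k1 + INR m - 1) * r1 ^ 2 + INR k2 * (INR k2 + INR m - 1) * r2 ^ 2)).
  { unfold dotR. rewrite (sumR_ext (S N) _ (fun j => - (F x j * lap0 m F x j) + -
        (INR (if Nat.leb j n1 then k1 else k2) *
        (INR (if Nat.leb j n1 then k1 else k2) + INR m - 1) * (F x j * F x j)))).
    2:{ intros j Hj. rewrite CA by lia. ring. }
    rewrite sumR_plus, !sumR_opp. unfold Rminus. f_equal. f_equal.
    rewrite SN, sumR_app.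
    rewrite (sumR_ext (S n1) _ (fun j => INR k1 * (INR k1 + INR m - 1) * (F1 x j * F1 x j))).
    2:{ intros j Hj. rewrite (proj2 (Nat.leb_le j n1)) by lia. rewrite F1E by lia. reflexivity. }
    rewrite (sumR_ext (S n2) _ (fun j => INR k2 * (INR k2 + INR m - 1) * (F2 x j * F2 x j))).
    2:{ intros j Hj. rewrite (proj2 (Nat.leb_gt (S n1 + j) n1)) by lia. rewrite F2E. reflexivity. }
    rewrite !sumR_scal. fold (dotR n1 (F1 x) (F1 x)) (dotR n2 (F2 x) (F2 x)).
    fold (nsq n1 (F1 x)) (nsq n2 (F2 x)). rewrite Hn1, Hn2, Hx, !pow1. ring. }
  split.
  - intros j Hj. unfold tension. cbv zeta beta.
    rewrite DA. rewrite <- (F1E x j Hj).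
    pose proof (CA j ltac:(unfold N; lia)) as Cj. rewrite (proj2 (Nat.leb_le j n1) Hj) in Cj.
    apply (final_alg _ _ _ _ _ r1 r2 _ _ _ _ _ _ Cj Hnx NP eq_refl).
  - intros j Hj. unfold tension. cbv zeta beta.
    rewrite DA. rewrite <- (F2E x j).
    pose proof (CA (S n1 + j)%nat ltac:(unfold N; lia)) as Cj.
    rewrite (proj2 (Nat.leb_gt (S n1 + j) n1)) in Cj by lia.
    apply (final_alg _ _ _ _ _ r1 r2 _ _ _ _ _ _ Cj Hnx NP eq_refl).
Qed.
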